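(* Let $p\in\mathbb{R}$. Assume $z=(v,m,\sigma,e)\in Z$ satisfies \[\lambda_{\max}(v\otimes v-\sigma)+\varepsilon|m-(e+p)v|<e\] for some $\varepsilon>0$. Then there exists $\gamma=\gamma_\varepsilon(e)>0$ depending only on $\varepsilon$ and $e$ such that $z\in\operatorname{int}(K_\gamma^\Lambda)$. Moreover, the map $\mathbb{R}_+\ni e\mapsto\gamma_\varepsilon(e)\in\mathbb{R}_+$ is continuous.
   Context: $\mathcal S_0^{2\times2}$ is the space of traceless symmetric $2\times2$ matrices, $Z:=\mathbb{R}^2\times\mathbb{R}^2\times\mathcal S_0^{2\times2}\times\mathbb{R}$, $\lambda_{\max}$ the largest eigenvalue, $K_\gamma:=\{z\in Z: v\otimes v-\sigma=e\,\mathrm{Id},\ m=(e+p)v,\ e\le\gamma\}$. The wave cone is $\Lambda=\{\bar z=(\bar v,\bar m,\bar\sigma,\bar e)\in Z:\ (\bar v,\bar e)\neq0\text{ and there is }0\ne(\xi,c)\in\mathbb{R}^2\times\mathbb{R}\text{ with }(\bar\sigma+\bar e\,\mathrm{Id})\xi+c\bar v=0,\ \bar v\cdot\xi=0,\ \bar m\cdot\xi+c\bar e=0\}$. A function $f:Z\to\mathbb{R}$ is $\Lambda$-convex if $s\mapsto f(z+s\bar z)$ is convex for all $z\in Z$, $\bar z\in\Lambda$; $K_\gamma^\Lambda$ is the set of $z\in Z$ with $f(z)\le\sup_{K_\gamma}f$ for all $\Lambda$-convex $f$. *)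

(* Defs.v *)
From HB Require Import structures.
From mathcomp Require Import all_boot all_order all_algebra.
From mathcomp Require Import all_classical all_reals all_analysis.
Set Implicit Arguments.
Unset Strict Implicit.
Unset Printing Implicit Defensive.
Import Order.TTheory GRing.Theory Num.Theory.
Import numFieldNormedType.Exports.
Local Open Scope ring_scope.
Local Open Scope classical_set_scope.

(* Points of R^2 x R^2 x M_2(R) x R ; the space Z is the subset where
   sigma is symmetric and traceless (predicate inZ). Vectors are columns. *)
Record Zpt (R : realType) := MkZ {
  zv : 'cV[R]_2 ; zm : 'cV[R]_2 ; zs : 'M[R]_2 ; ze : R }.

Definition inZ (R : realType) (z : Zpt R) : Prop :=
  (zs z)^T = zs z /\ \tr (zs z) = 0.

Definition zadd (R : realType) (z w : Zpt R) : Zpt R :=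
  MkZ (zv z + zv w) (zm z + zm w) (zs z + zs w) (ze z + ze w).

Definition zscale (R : realType) (s : R) (z : Zpt R) : Zpt R :=
  MkZ (s *: zv z) (s *: zm z) (s *: zs z) (s * ze z).

Definition dot (R : realType) (x y : 'cV[R]_2) : R := \sum_i x i 0 * y i 0.
Definition enorm (R : realType) (x : 'cV[R]_2) : R := Num.sqrt (dot x x).

Definition lambda_max (R : realType) (A : 'M[R]_2) : R :=
  sup [set a : R | eigenvalue A a].

Definition Kset (R : realType) (p gamma : R) : set (Zpt R) :=
  [set z | inZ z /\ zv z *m (zv z)^T - zs z = (ze z)%:M
          /\ zm z = (ze z + p) *: zv z /\ ze z <= gamma].

Definition Lambda (R : realType) : set (Zpt R) :=
  [set zb | inZ zb /\ (zv zb <> 0 \/ ze zb <> 0) /\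
     exists (xi : 'cV[R]_2) (c : R), (xi <> 0 \/ c <> 0) /\
       (zs zb + (ze zb)%:M) *m xi + c *: zv zb = 0 /\
       dot (zv zb) xi = 0 /\
       dot (zm zb) xi + c * ze zb = 0].

Definition convex_fun1 (R : realType) (g : R -> R) : Prop :=
  forall s t l : R, 0 <= l -> l <= 1 ->
    g (l * s + (1 - l) * t) <= l * g s + (1 - l) * g t.

Definition Lambda_convex (R : realType) (f : Zpt R -> R) : Prop :=
  forall z zb, inZ z -> Lambda zb -> convex_fun1 (fun s => f (zadd z (zscale s zb))).

Definition Lambda_hull (R : realType) (S : set (Zpt R)) : set (Zpt R) :=
  [set z | inZ z /\ forall f : Zpt R -> R, Lambda_convex f ->
      ((f z)%:E <= ereal_sup [set (f y)%:E | y in S])%E].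

Definition zdist (R : realType) (z w : Zpt R) : R :=
  Num.sqrt (dot (zv z - zv w) (zv z - zv w) + dot (zm z - zm w) (zm z - zm w)
    + \sum_i \sum_j (zs z i j - zs w i j) ^+ 2 + (ze z - ze w) ^+ 2).

Definition interiorZ (R : realType) (S : set (Zpt R)) : set (Zpt R) :=
  [set z | inZ z /\ exists r : R, 0 < r /\
      forall w, inZ w -> zdist z w < r -> S w].

(* Main.v *)
Require Import Defs.
From HB Require Import structures.
From mathcomp Require Import all_boot all_order all_algebra.
From mathcomp Require Import all_classical all_reals all_analysis.
From mathcomp Require Import ring lra.
Import Order.TTheory GRing.Theory Num.Theory.
Import numFieldNormedType.Exports.
Local Open Scope ring_scope.
Local Open Scope classical_set_scope.

Lemma zP {R : realType} (a b : Zpt R) :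
  zv a = zv b -> zm a = zm b -> zs a = zs b -> ze a = ze b -> a = b.
Proof. by case: a; case: b => /= ? ? ? ? ? ? ? ? -> -> -> ->. Qed.

Lemma ord2P (P : 'I_2 -> Prop) : P 0 -> P 1 -> forall i, P i.
Proof.
move=> P0 P1 [[|[|k]] Hk].
- by have -> : Ordinal Hk = 0 by apply/val_inj.
- by have -> : Ordinal Hk = 1 by apply/val_inj.
- by [].
Qed.

Lemma cvP {R : realType} (x y : 'cV[R]_2) :
  x 0 0 = y 0 0 -> x 1 0 = y 1 0 -> x = y.
Proof.
move=> h0 h1; apply/matrixP => i j; rewrite (ord1 j).
by elim/ord2P: i.
Qed.

Lemma mP {R : realType} (x y : 'M[R]_2) :
  x 0 0 = y 0 0 -> x 0 1 = y 0 1 -> x 1 0 = y 1 0 -> x 1 1 = y 1 1 -> x = y.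
Proof.
move=> h00 h01 h10 h11; apply/matrixP => i j.
by elim/ord2P: i; elim/ord2P: j.
Qed.

Lemma sum2 {R : realType} (F : 'I_2 -> R) : \sum_i F i = F 0 + F 1.
Proof. rewrite !big_ord_recl big_ord0 addr0; congr (_ + F _); exact/val_inj. Qed.

Lemma dotE {R : realType} (x y : 'cV[R]_2) : dot x y = x 0 0 * y 0 0 + x 1 0 * y 1 0.
Proof. by rewrite /dot sum2. Qed.

Lemma trE {R : realType} (x : 'M[R]_2) : \tr x = x 0 0 + x 1 1.
Proof. by rewrite /mxtrace sum2. Qed.

Lemma outerE {R : realType} (x : 'cV[R]_2) i j : (x *m x^T) i j = x i 0 * x j 0.
Proof. by rewrite !mxE big_ord1 !mxE. Qed.

Lemma mulmx2E {R : realType} (A : 'M[R]_2) (x : 'cV[R]_2) i :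
  (A *m x) i 0 = A i 0 * x 0 0 + A i 1 * x 1 0.
Proof. by rewrite !mxE sum2. Qed.

Definition cv2 {R : realType} (a b : R) : 'cV[R]_2 :=
  \matrix_(i < 2, j < 1) (if (i : nat) == 0%N then a else b).
Definition sm2 {R : realType} (a b c d : R) : 'M[R]_2 :=
  \matrix_(i < 2, j < 2)
    (if (i : nat) == 0%N then (if (j : nat) == 0%N then a else b)
     else (if (j : nat) == 0%N then c else d)).

Lemma cv2E0 {R : realType} (a b : R) : cv2 a b 0 0 = a.
Proof. by rewrite mxE. Qed.
Lemma cv2E1 {R : realType} (a b : R) : cv2 a b 1 0 = b.
Proof. by rewrite mxE. Qed.
Lemma sm2E {R : realType} (a b c d : R) :
  [/\ sm2 a b c d 0 0 = a, sm2 a b c d 0 1 = b, sm2 a b c d 1 0 = c & sm2 a b c d 1 1 = d].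
Proof. by rewrite !mxE. Qed.

Lemma scalarE {R : realType} (a : R) : 
  [/\ (a%:M : 'M[R]_2) 0 0 = a, (a%:M : 'M[R]_2) 0 1 = 0, (a%:M : 'M[R]_2) 1 0 = 0 & (a%:M : 'M[R]_2) 1 1 = a].
Proof. by rewrite !mxE /=. Qed.


Definition qq {R : realType} (x1 x2 : R) := (x1 ^+ 2 + x2 ^+ 2) / 2.

Definition kpt {R : realType} (p x1 x2 : R) : Zpt R :=
  MkZ (cv2 x1 x2) (cv2 ((qq x1 x2 + p) * x1) ((qq x1 x2 + p) * x2))
      (sm2 (x1 ^+ 2 - qq x1 x2) (x1 * x2) (x1 * x2) (x2 ^+ 2 - qq x1 x2)) (qq x1 x2).

Lemma kpt_inZ {R : realType} (p x1 x2 : R) : inZ (kpt p x1 x2).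
Proof.
split => /=.
  by apply: mP; rewrite !mxE.
by rewrite trE !mxE /= /qq; field.
Qed.

Lemma kpt_K {R : realType} (p g x1 x2 : R) : qq x1 x2 <= g -> Kset p g (kpt p x1 x2).
Proof.
move=> hg; rewrite /Kset /=; split; first exact: kpt_inZ.
split; last (split; last exact: hg).
  by apply: mP; rewrite !mxE !big_ord1 !mxE /= ?mulr1n ?mulr0n; ring.
by apply: cvP; rewrite !mxE.
Qed.

Lemma LamK {R : realType} (p x1 x2 y1 y2 c : R) (zb : Zpt R) :
  c != 0 -> (x1 != y1) || (x2 != y2) ->
  zb = zscale c (zadd (kpt p x1 x2) (zscale (-1) (kpt p y1 y2))) -> Lambda zb.
Proof.
move=> hc hxy ->; split.
  split => /=.
    by apply: mP; rewrite !mxE.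
  by rewrite trE !mxE /= /qq; field.
split.
  left => /= h.
  have h0 := congr1 (fun M : 'cV[R]_2 => M 0 0) h.
  have h1 := congr1 (fun M : 'cV[R]_2 => M 1 0) h.
  move: h0 h1; rewrite /= !mxE /= => h0 h1.
  have e0 : c * (x1 - y1) = 0 by rewrite -h0; ring.
  have e1 : c * (x2 - y2) = 0 by rewrite -h1; ring.
  move: e0 e1 => /eqP; rewrite mulf_eq0 (negbTE hc) /= subr_eq0 => /eqP e0.
  move=> /eqP; rewrite mulf_eq0 (negbTE hc) /= subr_eq0 => /eqP e1.
  by move: hxy; rewrite e0 e1 !eqxx.
exists (cv2 (y2 - x2) (x1 - y1)), (- (x1 * y2 - x2 * y1)).
split.
  left => h.
  have h0 := congr1 (fun M : 'cV[R]_2 => M 0 0) h.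
  have h1 := congr1 (fun M : 'cV[R]_2 => M 1 0) h.
  move: h0 h1; rewrite /= !mxE /= => /eqP h0 /eqP h1.
  move: h0 h1; rewrite subr_eq0 => /eqP h0; rewrite subr_eq0 => /eqP h1.
  by move: hxy; rewrite h0 h1 !eqxx.
split.
  apply: cvP; rewrite !mxE !sum2 !mxE /= ?mulr1n ?mulr0n /qq; ring.
split.
  rewrite dotE !mxE /=; ring.
rewrite dotE !mxE /= /qq; ring.
Qed.


Definition zcomb {R : realType} (l : R) (a b : Zpt R) :=
  zadd (zscale l a) (zscale (1 - l) b).
Definition zsub {R : realType} (a b : Zpt R) := zadd a (zscale (-1) b).

Lemma inZ_comb {R : realType} (l : R) {a b} : inZ a -> inZ b -> inZ (zcomb l a b).
Proof.
move=> [ha1 ha2] [hb1 hb2]; split => /=.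
  by rewrite linearD !linearZ /= ha1 hb1.
by rewrite mxtraceD !mxtraceZ ha2 hb2 !mulr0 addr0.
Qed.

Ltac zring := apply: zP => /=; try (apply/matrixP => i j; rewrite !mxE); field; rewrite ?pnatr_eq0 //.

Lemma step {R : realType} {f : Zpt R -> R} (Hf : Lambda_convex f) {a b : Zpt R} {l : R} :
  inZ b -> Lambda (zsub a b) -> 0 <= l -> l <= 1 ->
  f (zcomb l a b) <= l * f a + (1 - l) * f b.
Proof.
move=> hb hL h0 h1.
have := Hf b (zsub a b) hb hL 1 0 l h0 h1.
have -> : zadd b (zscale (l * 1 + (1 - l) * 0) (zsub a b)) = zcomb l a b by zring.
have -> : zadd b (zscale 1 (zsub a b)) = a by zring.
by have -> : zadd b (zscale 0 (zsub a b)) = b by zring.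
Qed.

Lemma cc_le {R : realType} (l a b M : R) : 0 <= l -> l <= 1 -> a <= M -> b <= M ->
  l * a + (1 - l) * b <= M.
Proof. move=> *; nra. Qed.

Lemma hull4 {R : realType} (f : Zpt R -> R) (Hf : Lambda_convex f) (p : R)
  (a1 a2 b1 b2 c1 c2 d1 d2 al be : R) :
  (a1 != b1) || (a2 != b2) -> (c1 != d1) || (c2 != d2) ->
  (a1 != c1) || (a2 != c2) -> (a1 != d1) || (a2 != d2) ->
  (b1 != c1) || (b2 != c2) -> (b1 != d1) || (b2 != d2) ->
  0 <= al <= 1 -> 0 <= be <= 1 ->
  forall X1 X2 X3 X4, X1 = kpt p a1 a2 -> X2 = kpt p b1 b2 ->
  X3 = kpt p c1 c2 -> X4 = kpt p d1 d2 ->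
  f (zcomb be (zcomb al (zcomb (1/2) X1 X3) (zcomb (1/2) X2 X3))
              (zcomb al (zcomb (1/2) X1 X4) (zcomb (1/2) X2 X4)))
  <= Num.max (Num.max (f X1) (f X2)) (Num.max (f X3) (f X4)).
Proof.
move=> h12 h34 h13 h14 h23 h24 /andP[al0 al1] /andP[be0 be1] X1 X2 X3 X4 e1 e2 e3 e4.
set M := Num.max _ _.
have hM1 : f X1 <= M by rewrite !le_max lexx.
have hM2 : f X2 <= M by rewrite !le_max lexx !orbT.
have hM3 : f X3 <= M by rewrite !le_max lexx !orbT.
have hM4 : f X4 <= M by rewrite !le_max lexx !orbT.
have hZ1 : inZ X1 by rewrite e1; exact: kpt_inZ.
have hZ2 : inZ X2 by rewrite e2; exact: kpt_inZ.
have hZ3 : inZ X3 by rewrite e3; exact: kpt_inZ.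
have hZ4 : inZ X4 by rewrite e4; exact: kpt_inZ.
have hh0 : (0 : R) <= 1/2 by lra.
have hh1 : (1/2 : R) <= 1 by lra.
have hY : forall (X Y : Zpt R) x1 x2 y1 y2, X = kpt p x1 x2 -> Y = kpt p y1 y2 ->
    (x1 != y1) || (x2 != y2) -> inZ Y -> f X <= M -> f Y <= M ->
    f (zcomb (1/2) X Y) <= M.
  move=> X Y x1 x2 y1 y2 eX eY hxy hYZ hX hY'.
  have hL : Lambda (zsub X Y).
    apply: (@LamK R p x1 x2 y1 y2 1 _ (oner_neq0 _) hxy).
    by rewrite eX eY; zring.
  eapply le_trans; first exact: (step Hf hYZ hL hh0 hh1).
  exact: cc_le.
have hN : forall X3' c1' c2', X3' = kpt p c1' c2' ->
    (a1 != c1') || (a2 != c2') -> (b1 != c1') || (b2 != c2') -> f X3' <= M ->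
    f (zcomb al (zcomb (1/2) X1 X3') (zcomb (1/2) X2 X3')) <= M.
  move=> X3' c1' c2' e3' h1' h2' hM'.
  have hZ3' : inZ X3' by rewrite e3'; exact: kpt_inZ.
  have hL : Lambda (zsub (zcomb (1/2) X1 X3') (zcomb (1/2) X2 X3')).
    apply: (@LamK R p a1 a2 b1 b2 (1/2) _ _ h12).
      by rewrite div1r invr_eq0 pnatr_eq0.
    rewrite -e1 -e2.
    have -> : zsub (zcomb (1/2) X1 X3') (zcomb (1/2) X2 X3') = zscale (1/2) (zsub X1 X2) by zring.
    by [].
  eapply le_trans; first exact: (step Hf (inZ_comb (1/2) hZ2 hZ3') hL al0 al1).
  by apply: cc_le => //; [apply: (hY _ _ a1 a2 c1' c2') | apply: (hY _ _ b1 b2 c1' c2')].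
have hL : Lambda (zsub (zcomb al (zcomb (1/2) X1 X3) (zcomb (1/2) X2 X3))
              (zcomb al (zcomb (1/2) X1 X4) (zcomb (1/2) X2 X4))).
  apply: (@LamK R p c1 c2 d1 d2 (1/2) _ _ h34).
    by rewrite div1r invr_eq0 pnatr_eq0.
  rewrite -e3 -e4.
  have -> : zsub (zcomb al (zcomb (1/2) X1 X3) (zcomb (1/2) X2 X3))
              (zcomb al (zcomb (1/2) X1 X4) (zcomb (1/2) X2 X4)) =
            zscale (1/2) (zsub X3 X4) by zring.
  by [].
have hZN : inZ (zcomb al (zcomb (1/2) X1 X4) (zcomb (1/2) X2 X4)).
  by apply: inZ_comb; apply: inZ_comb.
eapply le_trans; first exact: (step Hf hZN hL be0 be1).
by apply: cc_le => //; [apply: (hN _ c1 c2) | apply: (hN _ d1 d2)].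
Qed.


Ltac fld := field; repeat (apply/andP; split); rewrite ?pnatr_eq0 //.

Lemma solve_st {R : realType} (c d : R) : 0 < c ->
  exists s t : R, [/\ 0 < s, 0 < t, s * t = 2 * c & s - t = d].
Proof.
move=> hc.
set S := Num.sqrt (d ^+ 2 + 8 * c).
have hS2 : S ^+ 2 = d ^+ 2 + 8 * c by rewrite sqr_sqrtr //; nra.
have hS0 : 0 <= S by exact: sqrtr_ge0.
have hSd : d < S by nra.
have hSd' : - d < S by nra.
exists ((d + S) / 2), ((- d + S) / 2); split.
- lra.
- lra.
- rewrite -[RHS]/(2 * c); have -> : 2 * c = (S ^+ 2 - d ^+ 2) / 4 by rewrite hS2; fld.
  fld.
- fld.
Qed.

Lemma st_bound {R : realType} {s t c d : R} : 0 < s -> 0 < t -> s * t = 2 * c -> s - t = d ->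
  s ^+ 2 <= 4 * c + d ^+ 2 /\ t ^+ 2 <= 4 * c + d ^+ 2.
Proof. move=> hs ht hst hd; split; nra. Qed.

Definition Zform {R : realType} (p v1 v2 k c1 c2 d1 d2 : R) : Zpt R :=
  MkZ (cv2 v1 v2)
      (cv2 (c1 * (d1 + 2 * v1) / 2 + c2 * ((1 + k ^+ 2) * d2 / 2 + k * v1 + v2) * k
             + ((c1 + k ^+ 2 * c2 + c2 + v1 ^+ 2 + v2 ^+ 2) / 2 + p) * v1)
           (c2 * ((1 + k ^+ 2) * d2 / 2 + k * v1 + v2)
             + ((c1 + k ^+ 2 * c2 + c2 + v1 ^+ 2 + v2 ^+ 2) / 2 + p) * v2))
      (sm2 (c1 + k ^+ 2 * c2 - (c1 + k ^+ 2 * c2 + c2 + v1 ^+ 2 + v2 ^+ 2) / 2 + v1 ^+ 2)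
           (k * c2 + v1 * v2) (k * c2 + v1 * v2)
           (- (c1 + k ^+ 2 * c2 - (c1 + k ^+ 2 * c2 + c2 + v1 ^+ 2 + v2 ^+ 2) / 2 + v1 ^+ 2)))
      ((c1 + k ^+ 2 * c2 + c2 + v1 ^+ 2 + v2 ^+ 2) / 2).

Lemma comb_id {R : realType} (p v1 v2 k s1 t1 s2 t2 : R) :
  s1 + t1 != 0 -> s2 + t2 != 0 ->
  zcomb (t2 / (s2 + t2))
    (zcomb (t1 / (s1 + t1)) (zcomb (1/2) (kpt p (v1 + s1) v2) (kpt p (v1 + s2 * k) (v2 + s2)))
                            (zcomb (1/2) (kpt p (v1 - t1) v2) (kpt p (v1 + s2 * k) (v2 + s2))))
    (zcomb (t1 / (s1 + t1)) (zcomb (1/2) (kpt p (v1 + s1) v2) (kpt p (v1 - t2 * k) (v2 - t2)))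
                            (zcomb (1/2) (kpt p (v1 - t1) v2) (kpt p (v1 - t2 * k) (v2 - t2))))
  = Zform p v1 v2 k (s1 * t1 / 2) (s2 * t2 / 2) (s1 - t1) (s2 - t2).
Proof.
move=> h1 h2.
apply: zP => /=.
- by apply: cvP; rewrite !mxE /=; fld.
- by apply: cvP; rewrite !mxE /= /qq; fld.
- by apply: mP; rewrite !mxE /= /qq; fld.
- by rewrite /qq; fld.
Qed.


Lemma boundA {R : realType} {v1 v2 E C11 C22 c1 B Q s t : R} :
  0 < C22 -> 0 < C11 -> c1 <= C11 -> C11 + C22 = 2 * E - v1 ^+ 2 - v2 ^+ 2 ->
  `|Q| <= B -> 0 < s -> 0 < t -> s * t = 2 * c1 -> s - t = 2 * Q - 2 * v1 ->
  qq (v1 + s) v2 <= 18 * E + 8 * B ^+ 2 /\ qq (v1 - t) v2 <= 18 * E + 8 * B ^+ 2.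
Proof.
move=> h22 h11 hc1 htr hQ hs ht hst hd.
have [bs bt] := st_bound hs ht hst hd.
have hQ2 : Q ^+ 2 <= B ^+ 2.
  move: hQ; rewrite ler_norml => /andP[hq1 hq2].
  have hq3 : 0 <= B - Q by lra.
  have hq4 : 0 <= B + Q by lra.
  have := mulr_ge0 hq3 hq4; nra.
have hd2 : (2 * Q - 2 * v1) ^+ 2 <= 8 * B ^+ 2 + 8 * v1 ^+ 2.
  have := sqr_ge0 (Q + v1); nra.
have h1 := sqr_ge0 (v1 - s).
have h2 := sqr_ge0 (v1 + t).
have h3 := sqr_ge0 v2.
rewrite /qq; split; nra.
Qed.

Lemma boundB {R : realType} {v1 v2 E C11 C12 C22 k B R2 s t : R} :
  0 < C22 -> C12 ^+ 2 <= C11 * C22 -> C11 + C22 = 2 * E - v1 ^+ 2 - v2 ^+ 2 ->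
  k = C12 / C22 ->
  `|R2| <= B -> 0 < s -> 0 < t -> s * t = 2 * C22 ->
  s - t = (2 * R2 - 2 * (k * v1 + v2)) / (1 + k ^+ 2) ->
  qq (v1 + s * k) (v2 + s) <= 18 * E + 8 * B ^+ 2 /\
  qq (v1 - t * k) (v2 - t) <= 18 * E + 8 * B ^+ 2.
Proof.
move=> h22 hC htr hk hR hs ht hst hd.
set d := s - t in hd.
have [bs bt] := st_bound hs ht hst (erefl d).
have hk1 : 0 < 1 + k ^+ 2 by nra.
have hR2 : R2 ^+ 2 <= B ^+ 2.
  move: hR; rewrite ler_norml => /andP[hq1 hq2].
  have hq3 : 0 <= B - R2 by lra.
  have hq4 : 0 <= B + R2 by lra.
  have := mulr_ge0 hq3 hq4; nra.
have hCk : C22 * (1 + k ^+ 2) <= C22 + C11.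
  rewrite hk; have -> : C22 * (1 + (C12 / C22) ^+ 2) = C22 + C12 ^+ 2 / C22 by field; rewrite gt_eqF.
  rewrite lerD2l ler_pdivrMr //; nra.
have hL : (k * v1 + v2) ^+ 2 <= (1 + k ^+ 2) * (v1 ^+ 2 + v2 ^+ 2).
  have := sqr_ge0 (k * v2 - v1); nra.
have hdk : d ^+ 2 * (1 + k ^+ 2) = (2 * R2 - 2 * (k * v1 + v2)) ^+ 2 / (1 + k ^+ 2).
  by rewrite hd; field; rewrite gt_eqF.
have hdk2 : d ^+ 2 * (1 + k ^+ 2) <= 8 * B ^+ 2 + 8 * (v1 ^+ 2 + v2 ^+ 2).
  rewrite hdk ler_pdivrMr //.
  have : (2 * R2 - 2 * (k * v1 + v2)) ^+ 2 <= 8 * R2 ^+ 2 + 8 * (k * v1 + v2) ^+ 2.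
    have := sqr_ge0 (R2 + (k * v1 + v2)); nra.
  have := mulr_ge0 (sqr_ge0 B) (sqr_ge0 k).
  nra.
have hk0 : 0 <= 1 + k ^+ 2 by apply: ltW.
have hs2 : s ^+ 2 * (1 + k ^+ 2) <= 4 * (C22 + C11) + 8 * B ^+ 2 + 8 * (v1 ^+ 2 + v2 ^+ 2).
  have := ler_wpM2r hk0 bs; nra.
have ht2 : t ^+ 2 * (1 + k ^+ 2) <= 4 * (C22 + C11) + 8 * B ^+ 2 + 8 * (v1 ^+ 2 + v2 ^+ 2).
  have := ler_wpM2r hk0 bt; nra.
have hv : v1 ^+ 2 + v2 ^+ 2 <= 2 * E.
  have : 0 <= C11 + C22.
    have : 0 <= C11 * C22 by nra.
    nra.
  lra.
have h1 := sqr_ge0 (v1 - s * k).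
have h2 := sqr_ge0 (v2 - s).
have h3 := sqr_ge0 (v1 + t * k).
have h4 := sqr_ge0 (v2 + t).
rewrite /qq; split; nra.
Qed.


Definition C11 {R : realType} (w : Zpt R) := ze w + zs w 0 0 - zv w 0 0 ^+ 2.
Definition C12 {R : realType} (w : Zpt R) := zs w 0 1 - zv w 0 0 * zv w 1 0.
Definition C22 {R : realType} (w : Zpt R) := ze w + zs w 1 1 - zv w 1 0 ^+ 2.
Definition Dt {R : realType} (w : Zpt R) := C11 w * C22 w - C12 w ^+ 2.
Definition mp1 {R : realType} (p : R) (w : Zpt R) := zm w 0 0 - (ze w + p) * zv w 0 0.
Definition mp2 {R : realType} (p : R) (w : Zpt R) := zm w 1 0 - (ze w + p) * zv w 1 0.

Lemma maxr_case {R : realType} (x y : R) : Num.max x y = x \/ Num.max x y = y.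
Proof. by rewrite maxEle; case: ifP; auto. Qed.

Lemma inZ_entries {R : realType} {w : Zpt R} : inZ w ->
  zs w 1 0 = zs w 0 1 /\ zs w 1 1 = - zs w 0 0.
Proof.
move=> [hT hTr]; split.
  by have := congr1 (fun M : 'M[R]_2 => M 0 1) hT; rewrite mxE.
by move: hTr; rewrite trE => /eqP; rewrite addr_eq0 => /eqP ->; rewrite opprK.
Qed.

Lemma hull_main {R : realType} (p g B : R) (w : Zpt R) : inZ w ->
  0 < C22 w -> 0 < Dt w -> `|mp2 p w| <= B * C22 w ->
  `|mp1 p w * C22 w - mp2 p w * C12 w| <= B * Dt w ->
  18 * ze w + 8 * B ^+ 2 <= g ->
  Lambda_hull (Kset p g) w.
Proof.
move=> hZ h22 hD hm2 hm1 hg.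
have [h10 h11] := inZ_entries hZ.
set v1 := zv w 0 0; set v2 := zv w 1 0.
set k := C12 w / C22 w.
set c1 := Dt w / C22 w.
set Q := (mp1 p w * C22 w - mp2 p w * C12 w) / Dt w.
set R2 := mp2 p w / C22 w.
set d1 := 2 * Q - 2 * v1.
set d2 := (2 * R2 - 2 * (k * v1 + v2)) / (1 + k ^+ 2).
have hc1 : 0 < c1 by apply: divr_gt0.
have [s1 [t1 [hs1 ht1 hst1 hd1]]] := solve_st c1 d1 hc1.
have [s2 [t2 [hs2 ht2 hst2 hd2]]] := solve_st (C22 w) d2 h22.
have hQ : `|Q| <= B by rewrite /Q normrM normfV (gtr0_norm hD) ler_pdivrMr.
have hR : `|R2| <= B by rewrite /R2 normrM normfV (gtr0_norm h22) ler_pdivrMr.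
have hC : C12 w ^+ 2 <= C11 w * C22 w by move: hD; rewrite /Dt; lra.
have h11p : 0 < C11 w.
  have := sqr_ge0 (C12 w); move: hD; rewrite /Dt => hD' h0.
  by rewrite -(pmulr_lgt0 _ h22); lra.
have hc1C : c1 <= C11 w by rewrite /c1 ler_pdivrMr // /Dt; have := sqr_ge0 (C12 w); lra.
have htr : C11 w + C22 w = 2 * ze w - v1 ^+ 2 - v2 ^+ 2.
  by rewrite /C11 /C22 h11 -/v1 -/v2; ring.
have [bA1 bA2] := boundA h22 h11p hc1C htr hQ hs1 ht1 hst1 hd1.
have [bB1 bB2] := boundB h22 hC htr (erefl k) hR hs2 ht2 hst2 hd2.
have hk1 : 1 + k ^+ 2 != 0 by rewrite gt_eqF //; have := sqr_ge0 k; lra.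
have h22n : C22 w != 0 by rewrite gt_eqF.
have hDn : Dt w != 0 by rewrite gt_eqF.
have hk22 : k * C22 w = C12 w by rewrite /k; fld.
have hCk : c1 + k ^+ 2 * C22 w = C11 w by rewrite /c1 /k /Dt; fld.
have hE : (c1 + k ^+ 2 * C22 w + C22 w + v1 ^+ 2 + v2 ^+ 2) / 2 = ze w.
  rewrite hCk; lra.
have hm2e : C22 w * ((1 + k ^+ 2) * d2 / 2 + k * v1 + v2) = mp2 p w.
  by rewrite /d2 /R2; fld.
have hm1e : c1 * (d1 + 2 * v1) / 2 + mp2 p w * k = mp1 p w.
  by rewrite /d1 /Q /c1 /k; fld.
have eW : w = Zform p v1 v2 k c1 (C22 w) d1 d2.
  apply: zP => /=.
  - by apply: cvP; rewrite !mxE.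
  - by apply: cvP; rewrite !mxE /= hE ?hm2e ?hm1e /mp1 /mp2 -/v1 -/v2; ring.
  - by apply: mP; rewrite !mxE /= ?hE ?hCk ?hk22 /C11 /C12 ?h10 ?h11 -/v1 -/v2; ring.
  - by rewrite hE.
have eW2 : Zform p v1 v2 k c1 (C22 w) d1 d2 =
    Zform p v1 v2 k (s1 * t1 / 2) (s2 * t2 / 2) (s1 - t1) (s2 - t2).
  have -> : s1 * t1 / 2 = c1 by rewrite hst1; fld.
  have -> : s2 * t2 / 2 = C22 w by rewrite hst2; fld.
  by rewrite hd1 hd2.
have hst1n : s1 + t1 != 0 by rewrite gt_eqF // addr_gt0.
have hst2n : s2 + t2 != 0 by rewrite gt_eqF // addr_gt0.
rewrite eW2 -comb_id // in eW.
split => // f Hf.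
have h12 : (v1 + s1 != v1 - t1) || (v2 != v2).
  by apply/orP; left; apply/eqP => h; lra.
have h34 : (v1 + s2 * k != v1 - t2 * k) || (v2 + s2 != v2 - t2).
  by apply/orP; right; apply/eqP => h; lra.
have h13 : (v1 + s1 != v1 + s2 * k) || (v2 != v2 + s2).
  by apply/orP; right; apply/eqP => h; lra.
have h14 : (v1 + s1 != v1 - t2 * k) || (v2 != v2 - t2).
  by apply/orP; right; apply/eqP => h; lra.
have h23 : (v1 - t1 != v1 + s2 * k) || (v2 != v2 + s2).
  by apply/orP; right; apply/eqP => h; lra.
have h24 : (v1 - t1 != v1 - t2 * k) || (v2 != v2 - t2).
  by apply/orP; right; apply/eqP => h; lra.
have hal : 0 <= t1 / (s1 + t1) <= 1.
  apply/andP; split; first by apply: divr_ge0; lra.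
  by rewrite ler_pdivrMr ?addr_gt0 //; lra.
have hbe : 0 <= t2 / (s2 + t2) <= 1.
  apply/andP; split; first by apply: divr_ge0; lra.
  by rewrite ler_pdivrMr ?addr_gt0 //; lra.
have hfW := @hull4 R f Hf p (v1 + s1) v2 (v1 - t1) v2 (v1 + s2 * k) (v2 + s2)
  (v1 - t2 * k) (v2 - t2) (t1 / (s1 + t1)) (t2 / (s2 + t2))
  h12 h34 h13 h14 h23 h24 hal hbe _ _ _ _ erefl erefl erefl erefl.
rewrite eW.
have hK : forall X, Kset p g X -> ((f X)%:E <= ereal_sup [set (f y)%:E | y in Kset p g])%E.
  by move=> X hX; apply: ereal_sup_ubound; exists X.
apply: (@le_trans _ _ (Num.max (Num.max (f (kpt p (v1 + s1) v2)) (f (kpt p (v1 - t1) v2)))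
          (Num.max (f (kpt p (v1 + s2 * k) (v2 + s2))) (f (kpt p (v1 - t2 * k) (v2 - t2)))))%:E).
  by rewrite lee_fin.
have K1 := kpt_K p g _ _ (le_trans bA1 hg).
have K2 := kpt_K p g _ _ (le_trans bA2 hg).
have K3 := kpt_K p g _ _ (le_trans bB1 hg).
have K4 := kpt_K p g _ _ (le_trans bB2 hg).
case: (maxr_case (Num.max (f (kpt p (v1 + s1) v2)) (f (kpt p (v1 - t1) v2)))
          (Num.max (f (kpt p (v1 + s2 * k) (v2 + s2))) (f (kpt p (v1 - t2 * k) (v2 - t2))))) => ->.
  by case: (maxr_case (f (kpt p (v1 + s1) v2)) (f (kpt p (v1 - t1) v2))) => ->; apply: hK.
by case: (maxr_case (f (kpt p (v1 + s2 * k) (v2 + s2))) (f (kpt p (v1 - t2 * k) (v2 - t2)))) => ->; apply: hK.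
Qed.


Lemma abs_le_sq {R : realType} (x y : R) : 0 <= y -> x ^+ 2 <= y ^+ 2 -> `|x| <= y.
Proof.
move=> hy hxy; rewrite ler_norml; apply/andP; split; nra.
Qed.

Lemma real_conds {R : realType} (a b dd e n eps S m1 m2 : R) :
  0 < eps -> 0 <= n -> n ^+ 2 = m1 ^+ 2 + m2 ^+ 2 -> 0 <= S ->
  S ^+ 2 = ((a - dd) / 2) ^+ 2 + b ^+ 2 -> (a + dd) / 2 + S + eps * n < e ->
  [/\ 0 < e - dd, 0 < (e - a) * (e - dd) - b ^+ 2,
      `|m2| < 2 / eps * (e - dd) &
      `|m1 * (e - dd) - m2 * (- b)| < 2 / eps * ((e - a) * (e - dd) - b ^+ 2)].
Proof.
move=> he hn hn2 hS hS2 hlt.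
have hmu : 0 <= eps * n by apply: mulr_ge0 => //; lra.
have hSa : `|(a - dd) / 2| <= S by apply: abs_le_sq => //; nra.
move: hSa; rewrite ler_norml => /andP[hSa1 hSa2].
have hta : 0 < e - eps * n - a by lra.
have htd : 0 < e - eps * n - dd by lra.
have hT : S < e - eps * n - (a + dd) / 2 by lra.
have hprod : b ^+ 2 < (e - eps * n - a) * (e - eps * n - dd).
  have -> : (e - eps * n - a) * (e - eps * n - dd) =
     (e - eps * n - (a + dd) / 2) ^+ 2 - ((a - dd) / 2) ^+ 2 by field.
  have : S ^+ 2 < (e - eps * n - (a + dd) / 2) ^+ 2 by nra.
  lra.
have h22 : 0 < e - dd by lra.
set C11 := e - a; set C22 := e - dd; set D := C11 * C22 - b ^+ 2.
have hDmu : eps * n * (C11 + C22 - eps * n) < D.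
  have : D - eps * n * (C11 + C22 - eps * n) = (e - eps * n - a) * (e - eps * n - dd) - b ^+ 2.
    by rewrite /D /C11 /C22; ring.
  lra.
have hD : 0 < D.
  have : 0 <= eps * n * (C11 + C22 - eps * n) by apply: mulr_ge0 => //; rewrite /C11 /C22; lra.
  lra.
have hm2n : `|m2| <= n by apply: abs_le_sq => //; nra.
have hn22 : eps * n < C22 by rewrite /C22; lra.
have hcs : (m1 * C22 - m2 * (- b)) ^+ 2 <= n ^+ 2 * (C22 ^+ 2 + b ^+ 2).
  rewrite hn2; have := sqr_ge0 (m1 * b - m2 * C22); nra.
have hcs2 : C22 ^+ 2 + b ^+ 2 <= (C11 + C22 - eps * n) ^+ 2.
  have h1 : 0 < C11 - eps * n by rewrite /C11; lra.
  have h2 : (C11 - eps * n) * C22 >= (C11 - eps * n) * (C22 - eps * n).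
    by rewrite ler_pM2l //; lra.
  have h3 : b ^+ 2 < (C11 - eps * n) * (C22 - eps * n) by rewrite /C11 /C22; lra.
  have := sqr_ge0 (C11 - eps * n); nra.
have hm1n : `|m1 * C22 - m2 * (- b)| <= n * (C11 + C22 - eps * n).
  apply: abs_le_sq.
    by apply: mulr_ge0 => //; rewrite /C11 /C22; lra.
  rewrite exprMn; apply: le_trans hcs _; apply: ler_wpM2l => //; exact: sqr_ge0.
have hepsinv : 2 / eps = 2 * eps^-1 by [].
split => //.
- rewrite mulrAC ltr_pdivlMr //.
  have : `|m2| * eps <= n * eps by rewrite ler_pM2r.
  lra.
- rewrite mulrAC ltr_pdivlMr //.
  have : `|m1 * C22 - m2 * (- b)| * eps <= n * (C11 + C22 - eps * n) * eps by rewrite ler_pM2r.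
  have : n * (C11 + C22 - eps * n) * eps = eps * n * (C11 + C22 - eps * n) by ring.
  lra.
Qed.

Lemma rvP {R : realType} (x y : 'rV[R]_2) :
  x 0 0 = y 0 0 -> x 0 1 = y 0 1 -> x = y.
Proof.
move=> h0 h1; apply/matrixP => i j; rewrite (ord1 i).
by elim/ord2P: j.
Qed.

Definition rv2 {R : realType} (a b : R) : 'rV[R]_2 :=
  \matrix_(i < 1, j < 2) (if (j : nat) == 0%N then a else b).

Lemma rv2_neq0 {R : realType} (a b : R) : (a != 0) || (b != 0) -> rv2 a b != 0.
Proof.
move=> hab; apply/eqP => h.
have h0 := congr1 (fun M : 'rV[R]_2 => M 0 0) h.
have h1 := congr1 (fun M : 'rV[R]_2 => M 0 1) h.
move: h0 h1; rewrite !mxE /= => h0 h1.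
by move: hab; rewrite h0 h1 eqxx.
Qed.

Lemma eig_sym2 {R : realType} (A : 'M[R]_2) (l : R) : A 1 0 = A 0 1 ->
  l ^+ 2 - (A 0 0 + A 1 1) * l + (A 0 0 * A 1 1 - A 0 1 ^+ 2) = 0 -> eigenvalue A l.
Proof.
move=> hs hc; apply/eigenvalueP.
case: (boolP ((A 0 1 != 0) || (l - A 0 0 != 0))) => hx.
  exists (rv2 (A 0 1) (l - A 0 0)); last exact: rv2_neq0.
  apply: rvP; rewrite !mxE !sum2 !mxE /= ?hs; nra.
exists (rv2 1 0); last by apply: rv2_neq0; rewrite oner_neq0.
move: hx; rewrite negb_or !negbK => /andP[/eqP h01 /eqP hl].
apply: rvP; rewrite !mxE !sum2 !mxE /= ?hs ?h01; lra.
Qed.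

Lemma eig_bound {R : realType} (A : 'M[R]_2) (mu : R) : eigenvalue A mu ->
  mu <= `|A 0 0 + A 1 1| + `|A 0 0 * A 1 1 - A 0 1 * A 1 0| + 1.
Proof.
move=> /eigenvalueP [x hx hx0].
have e1 : (A 0 0 - mu) * x 0 0 + A 1 0 * x 0 1 = 0.
  have := congr1 (fun M : 'rV[R]_2 => M 0 0) hx; rewrite !mxE !sum2 => h; lra.
have e2 : A 0 1 * x 0 0 + (A 1 1 - mu) * x 0 1 = 0.
  have := congr1 (fun M : 'rV[R]_2 => M 0 1) hx; rewrite !mxE !sum2 => h; lra.
set P := (A 0 0 - mu) * (A 1 1 - mu) - A 0 1 * A 1 0.
have p0 : P * x 0 0 = 0.
  have -> : P * x 0 0 = (A 1 1 - mu) * ((A 0 0 - mu) * x 0 0 + A 1 0 * x 0 1)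
                         - A 1 0 * (A 0 1 * x 0 0 + (A 1 1 - mu) * x 0 1) by rewrite /P; ring.
  by rewrite e1 e2; ring.
have p1 : P * x 0 1 = 0.
  have -> : P * x 0 1 = (A 0 0 - mu) * (A 0 1 * x 0 0 + (A 1 1 - mu) * x 0 1)
                         - A 0 1 * ((A 0 0 - mu) * x 0 0 + A 1 0 * x 0 1) by rewrite /P; ring.
  by rewrite e1 e2; ring.
have hP : P = 0.
  apply/eqP; apply: contraR hx0 => hP.
  have z0 : x 0 0 = 0 by move/eqP: p0; rewrite mulf_eq0 (negbTE hP) => /eqP.
  have z1 : x 0 1 = 0 by move/eqP: p1; rewrite mulf_eq0 (negbTE hP) => /eqP.
  by apply/eqP; apply: rvP; rewrite ?z0 ?z1 !mxE.
move: hP; rewrite /P => hP.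
set t := A 0 0 + A 1 1; set d := A 0 0 * A 1 1 - A 0 1 * A 1 0.
have hc : mu ^+ 2 = t * mu - d by rewrite /t /d; lra.
have ht := ler_norm t; have hd := ler_norm (- d); rewrite normrN in hd.
have hd0 := normr_ge0 d; have ht0 := normr_ge0 t.
rewrite leNgt; apply/negP => hmu.
have hm1 : 1 <= mu by lra.
clear -hc ht hd hd0 ht0 hmu hm1.
nra.
Qed.

Lemma lmax_ge {R : realType} (A : 'M[R]_2) (l : R) : A 1 0 = A 0 1 ->
  l ^+ 2 - (A 0 0 + A 1 1) * l + (A 0 0 * A 1 1 - A 0 1 ^+ 2) = 0 -> l <= lambda_max A.
Proof.
move=> hs hc; rewrite /lambda_max; apply: ub_le_sup; last exact: eig_sym2.
exists (`|A 0 0 + A 1 1| + `|A 0 0 * A 1 1 - A 0 1 * A 1 0| + 1) => mu hmu.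
exact: eig_bound.
Qed.

Lemma z0_conds {R : realType} (p eps : R) (z : Zpt R) : 0 < eps -> inZ z ->
  lambda_max (zv z *m (zv z)^T - zs z) + eps * enorm (zm z - (ze z + p) *: zv z) < ze z ->
  [/\ 0 < C22 z, 0 < Dt z, `|mp2 p z| < 2 / eps * C22 z &
      `|mp1 p z * C22 z - mp2 p z * C12 z| < 2 / eps * Dt z].
Proof.
move=> heps hZ hlt.
have [h10 h11] := inZ_entries hZ.
set A := zv z *m (zv z)^T - zs z in hlt.
have hA00 : A 0 0 = zv z 0 0 ^+ 2 - zs z 0 0 by rewrite /A !mxE big_ord1 !mxE expr2.
have hA01 : A 0 1 = zv z 0 0 * zv z 1 0 - zs z 0 1 by rewrite /A !mxE big_ord1 !mxE.
have hA10 : A 1 0 = A 0 1 by rewrite hA01 /A !mxE big_ord1 !mxE h10 mulrC.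
have hA11 : A 1 1 = zv z 1 0 ^+ 2 - zs z 1 1 by rewrite /A !mxE big_ord1 !mxE expr2.
set a := A 0 0; set b := A 0 1; set dd := A 1 1.
set S := Num.sqrt (((a - dd) / 2) ^+ 2 + b ^+ 2).
have hS0 : 0 <= S by exact: sqrtr_ge0.
have hS2 : S ^+ 2 = ((a - dd) / 2) ^+ 2 + b ^+ 2.
  by rewrite sqr_sqrtr // addr_ge0 // sqr_ge0.
have hl : (a + dd) / 2 + S <= lambda_max A.
  apply: lmax_ge => //.
  have -> : (a + dd) / 2 + S = S + (a + dd) / 2 by ring.
  rewrite -/a -/b -/dd.
  have : ((a + dd) / 2) ^+ 2 - (a + dd) * ((a + dd) / 2) + (a * dd - b ^+ 2) = - S ^+ 2.
    by rewrite hS2; field.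
  move=> h; rewrite !sqrrD; lra.
set n := enorm (zm z - (ze z + p) *: zv z) in hlt.
have hn0 : 0 <= n by exact: sqrtr_ge0.
have hn2 : n ^+ 2 = mp1 p z ^+ 2 + mp2 p z ^+ 2.
  rewrite /n /enorm sqr_sqrtr; last by rewrite dotE; apply: addr_ge0; rewrite -expr2 sqr_ge0.
  by rewrite dotE !mxE /mp1 /mp2 !expr2.
have hlt' : (a + dd) / 2 + S + eps * n < ze z by lra.
have [c1 c2 c3 c4] := real_conds a b dd (ze z) n eps S (mp1 p z) (mp2 p z) heps hn0 hn2 hS0 hS2 hlt'.
have e22 : C22 z = ze z - dd by rewrite /dd hA11 /C22; ring.
have e12 : C12 z = - b by rewrite /b hA01 /C12; ring.
have e11 : C11 z = ze z - a by rewrite /a hA00 /C11; ring.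
have eD : Dt z = (ze z - a) * (ze z - dd) - b ^+ 2 by rewrite /Dt e11 e22 e12 sqrrN.
by rewrite eD e22 e12; split.
Qed.


Lemma le_sqrt_sum {R : realType} (x S : R) : x ^+ 2 <= S -> `|x| <= Num.sqrt S.
Proof.
move=> h; rewrite -sqrtr_sqr ler_sqrt //; apply: le_trans h; exact: sqr_ge0.
Qed.

Lemma zdist_bound {R : realType} (z w : Zpt R) :
  [/\ `|zv z 0 0 - zv w 0 0| <= zdist z w, `|zv z 1 0 - zv w 1 0| <= zdist z w,
      `|zm z 0 0 - zm w 0 0| <= zdist z w & `|zm z 1 0 - zm w 1 0| <= zdist z w] /\
  [/\ `|zs z 0 0 - zs w 0 0| <= zdist z w, `|zs z 0 1 - zs w 0 1| <= zdist z w,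
      `|zs z 1 1 - zs w 1 1| <= zdist z w & `|ze z - ze w| <= zdist z w].
Proof.
rewrite /zdist !dotE !sum2 !mxE.
have h1 := sqr_ge0 (zv z 0 0 - zv w 0 0).
have h2 := sqr_ge0 (zv z 1 0 - zv w 1 0).
have h3 := sqr_ge0 (zm z 0 0 - zm w 0 0).
have h4 := sqr_ge0 (zm z 1 0 - zm w 1 0).
have h5 := sqr_ge0 (zs z 0 0 - zs w 0 0).
have h6 := sqr_ge0 (zs z 0 1 - zs w 0 1).
have h7 := sqr_ge0 (zs z 1 0 - zs w 1 0).
have h8 := sqr_ge0 (zs z 1 1 - zs w 1 1).
have h9 := sqr_ge0 (ze z - ze w).
by split; split; apply: le_sqrt_sum; lra.
Qed.

Lemma cvg_coord {R : realType} (z0 : Zpt R) (u : nat -> Zpt R) (g : Zpt R -> R) :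
  (forall n, `|g z0 - g (u n)| < n.+1%:R^-1) -> g (u n) @[n --> \oo] --> g z0.
Proof.
move=> h; apply/cvgrPdist_lt => e he.
near=> n.
apply: lt_trans (h n) _.
near: n.
exact: (near_infty_natSinv_lt (PosNum he)).
Unshelve. all: end_near.
Qed.

Lemma near_pos {R : realType} (z0 : Zpt R) (F : Zpt R -> R) : 0 < F z0 ->
  (forall u : nat -> Zpt R, (forall n, zdist z0 (u n) < n.+1%:R^-1) ->
     F (u n) @[n --> \oo] --> F z0) ->
  exists2 r : R, 0 < r & forall w, zdist z0 w < r -> 0 < F w.
Proof.
move=> hF hcv; apply: contrapT => hno.
have hu : forall n : nat, exists w, zdist z0 w < n.+1%:R^-1 /\ F w <= 0.
  move=> n; apply: contrapT => hn; apply: hno; exists n.+1%:R^-1 => // w hw.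
  rewrite ltNge; apply/negP => hFw; by apply: hn; exists w.
pose u n := proj1_sig (cid (hu n)).
have hu1 n : zdist z0 (u n) < n.+1%:R^-1 /\ F (u n) <= 0 := proj2_sig (cid (hu n)).
have hc := hcv u (fun n => (hu1 n).1).
have hnear := cvgr_gt _ hc _ hF.
near \oo => n.
have := (hu1 n).2.
have : 0 < F (u n) by near: n; exact: hnear.
lra.
Unshelve. all: end_near.
Qed.


Lemma coords_cvg {R : realType} {z0 : Zpt R} {u : nat -> Zpt R} :
  (forall n, zdist z0 (u n) < n.+1%:R^-1) ->
  [/\ zv (u n) 0 0 @[n --> \oo] --> zv z0 0 0, zv (u n) 1 0 @[n --> \oo] --> zv z0 1 0,
      zm (u n) 0 0 @[n --> \oo] --> zm z0 0 0 & zm (u n) 1 0 @[n --> \oo] --> zm z0 1 0] /\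
  [/\ zs (u n) 0 0 @[n --> \oo] --> zs z0 0 0, zs (u n) 0 1 @[n --> \oo] --> zs z0 0 1,
      zs (u n) 1 1 @[n --> \oo] --> zs z0 1 1 & ze (u n) @[n --> \oo] --> ze z0].
Proof.
move=> hu.
have H n := zdist_bound z0 (u n).
split; split.
- by apply: (@cvg_coord R z0 u (fun w => zv w 0 0)) => n; apply: le_lt_trans (hu n); case: (H n) => [[]].
- by apply: (@cvg_coord R z0 u (fun w => zv w 1 0)) => n; apply: le_lt_trans (hu n); case: (H n) => [[]].
- by apply: (@cvg_coord R z0 u (fun w => zm w 0 0)) => n; apply: le_lt_trans (hu n); case: (H n) => [[]].
- by apply: (@cvg_coord R z0 u (fun w => zm w 1 0)) => n; apply: le_lt_trans (hu n); case: (H n) => [[]].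
- by apply: (@cvg_coord R z0 u (fun w => zs w 0 0)) => n; apply: le_lt_trans (hu n); case: (H n) => _ [].
- by apply: (@cvg_coord R z0 u (fun w => zs w 0 1)) => n; apply: le_lt_trans (hu n); case: (H n) => _ [].
- by apply: (@cvg_coord R z0 u (fun w => zs w 1 1)) => n; apply: le_lt_trans (hu n); case: (H n) => _ [].
- by apply: (@cvg_coord R z0 u (fun w => ze w)) => n; apply: le_lt_trans (hu n); case: (H n) => _ [].
Qed.

Lemma Fs_cvg {R : realType} (p B : R) (z0 : Zpt R) (u : nat -> Zpt R) :
  (forall n, zdist z0 (u n) < n.+1%:R^-1) ->
  [/\ C22 (u n) @[n --> \oo] --> C22 z0, Dt (u n) @[n --> \oo] --> Dt z0,
      (B * C22 (u n) - `|mp2 p (u n)|) @[n --> \oo] --> B * C22 z0 - `|mp2 p z0| &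
      (B * Dt (u n) - `|mp1 p (u n) * C22 (u n) - mp2 p (u n) * C12 (u n)|) @[n --> \oo]
        --> B * Dt z0 - `|mp1 p z0 * C22 z0 - mp2 p z0 * C12 z0|].
Proof.
move=> hu; have [[hv0 hv1 hm0 hm1] [hs00 hs01 hs11 he]] := coords_cvg hu.
have c22 : C22 (u n) @[n --> \oo] --> C22 z0.
  by apply: cvgB; [apply: cvgD | apply: cvgM].
have c11 : C11 (u n) @[n --> \oo] --> C11 z0.
  by apply: cvgB; [apply: cvgD | apply: cvgM].
have c12 : C12 (u n) @[n --> \oo] --> C12 z0.
  by apply: cvgB; [| apply: cvgM].
have cD : Dt (u n) @[n --> \oo] --> Dt z0.
  by apply: cvgB; apply: cvgM.
have cm1 : mp1 p (u n) @[n --> \oo] --> mp1 p z0.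
  by apply: cvgB => //; apply: cvgM => //; apply: cvgD => //; exact: cvg_cst.
have cm2 : mp2 p (u n) @[n --> \oo] --> mp2 p z0.
  by apply: cvgB => //; apply: cvgM => //; apply: cvgD => //; exact: cvg_cst.
split => //.
- apply: cvgB; first by apply: cvgM => //; exact: cvg_cst.
  exact: cvg_norm.
- apply: cvgB; first by apply: cvgM => //; exact: cvg_cst.
  by apply: cvg_norm; apply: cvgB; apply: cvgM.
Qed.

Theorem proposition2p10 (R : realType) (eps : R) (heps : 0 < eps) :
  exists gamma : R -> R,
    (forall e : R, 0 < e -> 0 < gamma e) /\
    (forall e : R, 0 < e -> {for e, continuous gamma}) /\
    forall (p : R) (z : Zpt R), inZ z ->
      lambda_max (zv z *m (zv z)^T - zs z)
        + eps * enorm (zm z - (ze z + p) *: zv z) < ze z ->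
      interiorZ (Lambda_hull (Kset p (gamma (ze z)))) z.
Proof.
have hc : 0 < 32 / eps ^+ 2 by apply: divr_gt0 => //; apply: exprn_gt0.
exists (fun e => 18 * e + 18 + 32 / eps ^+ 2).
split.
  by move=> e he; lra.
split.
  move=> e he.
  apply: cvgD; last exact: cvg_cst.
  apply: cvgD; last exact: cvg_cst.
  by apply: cvgM; [exact: cvg_cst | exact: cvg_id].
move=> p z hZ hlt.
have [k1 k2 k3 k4] := z0_conds p eps z heps hZ hlt.
set B := 2 / eps.
have k3' : 0 < B * C22 z - `|mp2 p z| by rewrite subr_gt0.
have k4' : 0 < B * Dt z - `|mp1 p z * C22 z - mp2 p z * C12 z| by rewrite subr_gt0.
have [r1 hr1 H1] := near_pos z C22 k1 (fun u hu => let: And4 a _ _ _ := Fs_cvg p B z u hu in a).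
have [r2 hr2 H2] := near_pos z Dt k2 (fun u hu => let: And4 _ a _ _ := Fs_cvg p B z u hu in a).
have [r3 hr3 H3] := near_pos z (fun w => B * C22 w - `|mp2 p w|) k3'
  (fun u hu => let: And4 _ _ a _ := Fs_cvg p B z u hu in a).
have [r4 hr4 H4] := near_pos z (fun w => B * Dt w - `|mp1 p w * C22 w - mp2 p w * C12 w|) k4'
  (fun u hu => let: And4 _ _ _ a := Fs_cvg p B z u hu in a).
split => //.
exists (Num.min (Num.min r1 r2) (Num.min (Num.min r3 r4) 1)).
split; first by rewrite !lt_min hr1 hr2 hr3 hr4 ltr01.
move=> w hw; rewrite !lt_min => /andP[/andP[d1 d2] /andP[/andP[d3 d4] d5]].
have := H3 w d3; have := H4 w d4; rewrite !subr_gt0 => h4 h3.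
apply: (hull_main p _ B w hw (H1 w d1) (H2 w d2) (ltW h3) (ltW h4)).
have [_ [_ _ _ he]] := zdist_bound z w.
have hew : ze w <= ze z + 1.
  move: he; rewrite ler_norml => /andP[he1 he2]; lra.
have -> : 8 * B ^+ 2 = 32 / eps ^+ 2 by rewrite /B; field; rewrite gt_eqF.
lra.
Qed.
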